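(* Let $\varphi:X\to\mathbb R$ be Lipschitz continuous and let $u$ be a calibrated subaction of $\varphi$. If $\underline{x},\underline{z}\in\Omega_\varphi$ satisfy $H_\varphi(\underline{x},\underline{z})+H_\varphi(\underline{z},\underline{x})=0$, then \[H_\varphi(\underline{x},\underline{y})+u(\underline{x})=H_\varphi(\underline{z},\underline{y})+u(\underline{z})\quad\text{for every }\underline{y}\in X.\]
   Context: $X=[0,1]^{\mathbb N_0}$ with metric $d_X(\underline{x},\underline{y})=\sum_{i\ge0}|x_i-y_i|/2^{i+1}$ and shift $\sigma(\underline{x})_i=x_{i+1}$. $\alpha_\varphi=\inf_\mu\int\varphi\,d\mu$ over $\sigma$-invariant Borel probability measures. $B(\underline{x},\underline{y},n;\varepsilon)=\{\underline{z}: d_X(\underline{x},\underline{z})<\varepsilon,\ d_X(\sigma^n\underline{z},\underline{y})<\varepsilon\}$. Mañé potential $S_\varphi(\underline{x},\underline{y})=\lim_{\varepsilon\to0}\inf\{\sum_{i=0}^{n-1}(\varphi(\sigma^i\underline{z})-\alpha_\varphi): n\in\mathbb N,\ \underline{z}\in B(\underline{x},\underline{y},n;\varepsilon)\}$; Peierls barrier $H_\varphi(\underline{x},\underline{y})=\lim_{\varepsilon\to0}\liminf_{n\to\infty}\inf\{\sum_{i=0}^{n-1}(\varphi(\sigma^i\underline{z})-\alpha_\varphi): \underline{z}\in B(\underline{x},\underline{y},n;\varepsilon)\}\in\mathbb R\cup\{+\infty\}$; Aubry set $\Omega_\varphi=\{\underline{x}: S_\varphi(\underline{x},\underline{x})=0\}$.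 A subaction is a continuous $u$ with $u(\underline{x})+\varphi(\underline{x})\ge u(\sigma\underline{x})+\alpha_\varphi$ for all $\underline{x}$; it is calibrated if $\min_{\sigma(\underline{y})=\underline{x}}(\varphi(\underline{y})+u(\underline{y}))=u(\underline{x})+\alpha_\varphi$ for every $\underline{x}$. *)

(* Defs.v *)
From HB Require Import structures.
From mathcomp Require Import all_boot all_order all_algebra.
From mathcomp Require Import all_classical all_reals all_analysis.

Set Implicit Arguments.
Unset Strict Implicit.
Unset Printing Implicit Defensive.

Import Order.TTheory GRing.Theory Num.Theory.
Import numFieldNormedType.Exports.
Local Open Scope classical_set_scope.
Local Open Scope ring_scope.

Section Defs.
Variable R : realType.

Record X := MkX { seqX :> nat -> R ; seqX_in : forall i, 0 <= seqX i <= 1 }.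

Lemma zero_in_unit : forall i : nat, 0 <= (fun _ : nat => (0 : R)) i <= 1.
Proof. by move=> i; rewrite lexx ler01. Qed.

Definition X0 : X := @MkX (fun _ => 0) zero_in_unit.

HB.instance Definition _ := gen_eqMixin X.
HB.instance Definition _ := gen_choiceMixin X.
HB.instance Definition _ := isPointed.Build X X0.

Definition dX (x y : X) : R :=
  limn (fun n => \sum_(0 <= i < n) `|x i - y i| / 2 ^+ i.+1).

Lemma shift_in (x : X) : forall i, 0 <= (fun j => x j.+1) i <= 1.
Proof. by move=> i; exact: seqX_in. Qed.

Definition shift (x : X) : X := @MkX (fun j => x j.+1) (shift_in x).

Definition dX_open : set (set X) :=
  [set A | forall x, A x -> exists2 e : R, 0 < e & forall y, dX x y < e -> A y].

Definition XM := g_sigma_algebraType dX_open.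

Definition shift_invariant (P : probability XM R) : Prop :=
  forall A : set XM, measurable A -> P (@shift @^-1` A) = P A.

(* alpha_phi = inf_mu \int phi dmu  (a finite number, since phi is bounded
   and continuous and invariant measures exist) *)
Definition alpha (phi : X -> R) : R :=
  fine (ereal_inf [set r | exists P : probability XM R,
          shift_invariant P /\ r = (\int[P]_(x in setT) (phi x)%:E)%E]).

Definition Bset (x y : X) (n : nat) (eps : R) : set X :=
  [set z | dX x z < eps /\ dX (iter n shift z) y < eps].

Definition cost (phi : X -> R) (n : nat) (z : X) : R :=
  \sum_(0 <= i < n) (phi (iter i shift z) - alpha phi).

Definition Mane (phi : X -> R) (x y : X) : \bar R :=
  lim ((fun eps : R => ereal_inf [set r | exists n : nat, exists z : X,
          (0 < n)%N /\ Bset x y n eps z /\ r = (cost phi n z)%:E]) @ 0^'+).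

Definition Peierls (phi : X -> R) (x y : X) : \bar R :=
  lim ((fun eps : R => limn_einf (fun n : nat =>
          ereal_inf [set (cost phi n z)%:E | z in Bset x y n eps])) @ 0^'+).

Definition Aubry (phi : X -> R) : set X := [set x | Mane phi x x = 0%E].

Definition lipschitz_X (phi : X -> R) : Prop :=
  exists L : R, forall x y : X, `|phi x - phi y| <= L * dX x y.

Definition continuous_X (u : X -> R) : Prop :=
  forall x : X, forall e : R, 0 < e ->
    exists2 d : R, 0 < d & forall y : X, dX x y < d -> `|u x - u y| < e.

Definition subaction (phi u : X -> R) : Prop :=
  continuous_X u /\ forall x : X, u x + phi x >= u (shift x) + alpha phi.

Definition calibrated_subaction (phi u : X -> R) : Prop :=
  subaction phi u /\
  forall x : X,
    (exists2 y : X, shift y = x & phi y + u y = u x + alpha phi) /\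
    (forall y : X, shift y = x -> u x + alpha phi <= phi y + u y).

End Defs.

(* Main.v *)
Require Import Defs.
From mathcomp Require Import all_boot all_order all_algebra.
From mathcomp Require Import all_classical all_reals all_analysis.
From mathcomp Require Import ring lra.
Import Order.TTheory GRing.Theory Num.Theory.
Import numFieldNormedType.Exports.
Set Implicit Arguments.
Unset Strict Implicit.
Unset Printing Implicit Defensive.
Local Open Scope classical_set_scope.
Local Open Scope ring_scope.

Section Metric.
Variable R : realType.
Implicit Types x y z w v : X R.

Definition ps (N : nat) x y : R := \sum_(0 <= i < N) `|x i - y i| / 2 ^+ i.+1.

Lemma ps_rec N x y : ps N.+1 x y = `|x 0%N - y 0%N| / 2 + ps N (Defs.shift x) (Defs.shift y) / 2.
Proof.
rewrite /ps big_nat_recl //= mulr_suml; congr (_ + _).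
by apply: eq_bigr => i _ /=; rewrite exprS invfM [2^-1 * _]mulrC mulrA.
Qed.

Lemma ps_ge0 N x y : 0 <= ps N x y.
Proof. by rewrite /ps; apply: sumr_ge0 => i _; rewrite divr_ge0 // exprn_ge0. Qed.

Lemma ps_le1 N x y : ps N x y <= 1.
Proof.
elim: N x y => [|N IH] x y; first by rewrite /ps big_geq.
rewrite ps_rec.
have h0 : `|x 0%N - y 0%N| <= 1.
  have := seqX_in x 0; have := seqX_in y 0.
  move=> /andP[? ?] /andP[? ?]; rewrite ler_norml; apply/andP; split; lra.
have := IH (Defs.shift x) (Defs.shift y); lra.
Qed.

Lemma ps_nd x y : {homo (fun N => ps N x y) : n m / (n <= m)%N >-> n <= m}.
Proof.
move=> n m nm; rewrite /ps (big_cat_nat (leq0n n) nm) /= lerDl.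
by apply: sumr_ge0 => i _; rewrite divr_ge0 // exprn_ge0.
Qed.

Lemma ps_cvg x y : cvgn (fun N => ps N x y).
Proof.
apply: nondecreasing_is_cvgn; first exact: ps_nd.
by exists 1 => _ [N _ <-]; exact: ps_le1.
Qed.

Lemma dXE x y : dX x y = limn (fun N => ps N x y).
Proof. by []. Qed.

Lemma dX_ge0 x y : 0 <= dX x y.
Proof.
rewrite dXE; apply: limr_ge; first exact: ps_cvg.
by apply: nearW => N; exact: ps_ge0.
Qed.

Lemma dX_sym x y : dX x y = dX y x.
Proof.
rewrite !dXE; congr (limn _); apply/funext => N; apply: eq_bigr => i _.
by rewrite distrC.
Qed.

Lemma dX_tri x y z : dX x z <= dX x y + dX y z.
Proof.
rewrite !dXE -limD; [|exact: ps_cvg|exact: ps_cvg].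
apply: ler_lim; [exact: ps_cvg| apply: is_cvgD; exact: ps_cvg|].
apply: nearW => N; change (ps N x z <= ps N x y + ps N y z); rewrite /ps -big_split /=; apply: ler_sum => i _.
rewrite -mulrDl ler_wpM2r ?invr_ge0 ?exprn_ge0 //.
by rewrite (le_trans _ (ler_normD _ _)) // addrA subrK.
Qed.

Lemma dX_rec x y : dX x y = `|x 0%N - y 0%N| / 2 + dX (Defs.shift x) (Defs.shift y) / 2.
Proof.
rewrite dXE; apply: cvg_lim => //.
rewrite -cvg_shiftS /=.
under eq_fun do rewrite ps_rec.
apply: cvgD; first exact: cvg_cst.
apply: cvgMl; exact: ps_cvg.
Qed.


Lemma X_eq (a b : X R) : (forall i, a i = b i) -> a = b.
Proof.
case: a => fa ha; case: b => fb hb /= e.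
have E : fa = fb by apply/funext.
subst fb; congr MkX; exact: Prop_irrelevance.
Qed.

Lemma iter_shiftE n w j : (iter n (@Defs.shift R) w) j = w (j + n)%N.
Proof.
elim: n j => [|n IH] j; first by rewrite addn0.
by rewrite iterS /= IH addSnnS.
Qed.

Lemma catX_in n w w' : forall i, 0 <= (fun i => if (i < n)%N then w i else w' (i - n)%N) i <= 1.
Proof. by move=> i /=; case: ifP => _; exact: seqX_in. Qed.

Definition catX n w w' : X R := MkX (catX_in n w w').

Lemma catX_shift n w w' : iter n (@Defs.shift R) (catX n w w') = w'.
Proof.
apply: X_eq => i; rewrite iter_shiftE /=.
by rewrite ltnNge leq_addl /= addnK.
Qed.

Lemma catX_agree n w w' i : (i < n)%N -> catX n w w' i = w i.
Proof. by move=> h /=; rewrite h. Qed.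

Lemma dX_agree n w v : (forall i, (i < n)%N -> w i = v i) ->
  dX w v <= dX (iter n (@Defs.shift R) w) (iter n (@Defs.shift R) v).
Proof.
elim: n w v => [|n IH] w v h; first by [].
rewrite !iterSr dX_rec h // subrr normr0 mul0r add0r.
apply: le_trans (IH _ _ _).
  rewrite ler_pdivrMr // ler_peMr //; [exact: dX_ge0|lra].
by move=> i ilt /=; apply: h.
Qed.

Lemma dX_agreeS n w v : (forall i, (i < n.+1)%N -> w i = v i) ->
  dX w v <= dX (iter n.+1 (@Defs.shift R) w) (iter n.+1 (@Defs.shift R) v) / 2.
Proof.
move=> h; rewrite dX_rec h // subrr normr0 mul0r add0r.
rewrite ler_pM2r ?invr_gt0 // !iterSr; apply: dX_agree => i ilt /=; exact: h.
Qed.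

End Metric.

Section Cost.
Variable R : realType.
Variable phi : X R -> R.
Local Notation sh := (@Defs.shift R).

Lemma cost_split n m (v : X R) : cost phi (n + m) v = cost phi n v + cost phi m (iter n sh v).
Proof.
rewrite /cost (big_cat_nat (leq0n n) (leq_addr m n)) /=; congr (_ + _).
rewrite -{1}[n]add0n big_addn addnC addnK; apply: eq_bigr => i _.
by rewrite iterD.
Qed.

Lemma cost_agree L : (forall a b, `|phi a - phi b| <= L * dX a b) ->
  forall n (w v : X R), (forall i, (i < n)%N -> w i = v i) ->
  cost phi n v <= cost phi n w + `|L| * dX (iter n sh w) (iter n sh v).
Proof.
move=> hL; elim=> [|n IH] w v h.
  by rewrite /cost !big_geq // add0r mulr_ge0 // dX_ge0.
have h' : forall i, (i < n)%N -> w i = v i by move=> i ilt; apply: h; exact: ltnW.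
have e : dX (iter n sh w) (iter n sh v) = dX (iter n.+1 sh w) (iter n.+1 sh v) / 2.
  rewrite dX_rec !iter_shiftE add0n h // subrr normr0 mul0r add0r.
  by rewrite -!iterS.
have := IH _ _ h'.
have hp : phi (iter n sh v) <= phi (iter n sh w) + `|L| * dX (iter n sh w) (iter n sh v).
  have := hL (iter n sh w) (iter n sh v).
  have := ler_norm L. have := dX_ge0 (iter n sh w) (iter n sh v).
  rewrite ler_norml => d0 nL /andP[h1 h2].
  have : L * dX (iter n sh w) (iter n sh v) <= `|L| * dX (iter n sh w) (iter n sh v).
    by rewrite ler_wpM2r.
  lra.
rewrite /cost !big_nat_recr //= -/(cost phi n v) -/(cost phi n w).
move: hp; rewrite e; lra.
Qed.

Lemma sub_cost u : (forall x, u (sh x) + alpha phi <= u x + phi x) ->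
  forall n (w : X R), u (iter n sh w) - u w <= cost phi n w.
Proof.
move=> hu; elim=> [|n IH] w; first by rewrite /cost big_geq // subrr.
rewrite /cost big_nat_recr //= -/(cost phi n w).
have := hu (iter n sh w); have := IH w; lra.
Qed.

End Cost.
Section Liminf.
Variable R : realType.
Local Open Scope ereal_scope.
Implicit Types u v : (\bar R)^nat.

Lemma einfs_le u v : (forall n, u n <= v n) -> forall n, einfs u n <= einfs v n.
Proof.
move=> uv n; apply: le_ereal_inf_tmp => _ [k /= nk <-].
apply: le_trans (uv k); apply: ereal_inf_lbound; by exists k.
Qed.

Lemma le_liminf u v : (forall n, u n <= v n) -> limn_einf u <= limn_einf v.
Proof.
move=> uv; rewrite !limn_einf_lim; apply: lee_lim; try exact: is_cvg_einfs.
by apply: nearW => n; exact: einfs_le.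
Qed.

Lemma ge_liminf u c : (forall n, c <= u n) -> c <= limn_einf u.
Proof.
move=> cu; rewrite limn_einf_lim; apply: lime_ge; first exact: is_cvg_einfs.
by apply: nearW => n; apply: le_ereal_inf_tmp => _ [k /= _ <-].
Qed.

Lemma inf_le_liminf u : ereal_inf (range u) <= limn_einf u.
Proof. by apply: ge_liminf => n; apply: ereal_inf_lbound; exists n. Qed.

Lemma liminf_shift u k : limn_einf (fun n => u (n + k)%N) = limn_einf u.
Proof.
rewrite !limn_einf_lim.
have E : einfs (fun n => u (n + k)%N) = (fun n => einfs u (n + k)%N).
  apply/funext => n; rewrite /einfs /=; congr ereal_inf.
  rewrite /sdrop; apply/seteqP; split.
    move=> _ [j nj <-]; exists (j + k)%N; last by [].
    by move: nj; rewrite /= leq_add2r.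
  move=> _ [j nj <-]; move: nj; rewrite /= => nj.
  have kj : (k <= j)%N by apply: leq_trans nj; exact: leq_addl.
  exists (j - k)%N; last by rewrite subnK.
  by rewrite /= -(leq_add2r k) subnK.
rewrite E.
apply: cvg_lim => //; rewrite (cvg_shiftn k (einfs u)).
exact: is_cvg_einfs.
Qed.

Lemma inf_add_le (T1 T2 : Type) (A : set T1) (B : set T2) (f : T1 -> R) (g : T2 -> R)
  (c : \bar R) (K c1 c2 : R) :
  (forall a, A a -> (c1 <= f a)%R) -> (forall b, B b -> (c2 <= g b)%R) ->
  (forall a b, A a -> B b -> c <= (f a + g b + K)%:E) ->
  c <= ereal_inf [set (f a)%:E | a in A] + ereal_inf [set (g b)%:E | b in B] + K%:E.
Proof.
move=> hf hg hc.
set iA := ereal_inf _; set iB := ereal_inf _.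
have hA : c1%:E <= iA by apply: le_ereal_inf_tmp => _ [a Aa <-]; rewrite lee_fin hf.
have hB : c2%:E <= iB by apply: le_ereal_inf_tmp => _ [b Bb <-]; rewrite lee_fin hg.
have iAN : iA != -oo by apply/negP => /eqP e; move: hA; rewrite e.
have iBN : iB != -oo by apply/negP => /eqP e; move: hB; rewrite e.
have [iAy|iAy] := eqVneq iA +oo.
  by rewrite iAy addye // addye ?leey.
have [iBy|iBy] := eqVneq iB +oo.
  by rewrite iBy addey // addye ?leey.
have iAf : iA \is a fin_num by apply/fin_numP.
have iBf : iB \is a fin_num by apply/fin_numP.
apply/lee_addgt0Pr => e e0.
have e20 : (0 < e / 2)%R by rewrite divr_gt0.
have [_ [a Aa <-] ha] := lb_ereal_inf_adherent e20 iAf.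
have [_ [b Bb <-] hb] := lb_ereal_inf_adherent e20 iBf.
apply: le_trans (hc _ _ Aa Bb) _.
move: ha hb; rewrite -/iA -/iB -(fineK iAf) -(fineK iBf) -!EFinD !lte_fin lee_fin.
lra.
Qed.


Lemma liminf_tri (G1 G2 G3 : (\bar R)^nat) (K c1 c2 : R) :
  (forall n, c1%:E <= G2 n) -> (forall m, c2%:E <= G3 m) ->
  (forall n m, G1 (n.+1 + m)%N <= G2 n.+1 + G3 m + K%:E) ->
  limn_einf G1 <= limn_einf G2 + limn_einf G3 + K%:E.
Proof.
move=> h2 h3 h.
have L2 : c1%:E <= limn_einf G2 by exact: ge_liminf.
have L3 : c2%:E <= limn_einf G3 by exact: ge_liminf.
have L2N : limn_einf G2 != -oo by apply/negP => /eqP e; move: L2; rewrite e.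
have L3N : limn_einf G3 != -oo by apply/negP => /eqP e; move: L3; rewrite e.
have [L2y|L2y] := eqVneq (limn_einf G2) +oo.
  by rewrite L2y addye // addye ?leey.
have L2f : limn_einf G2 \is a fin_num by apply/fin_numP.
have hm : forall m, limn_einf G1 <= limn_einf G2 + (G3 m + K%:E).
  move=> m.
  have G3N : G3 m != -oo by apply/negP => /eqP e; move: (h3 m); rewrite e.
  have [G3y|G3y] := eqVneq (G3 m) +oo.
    by rewrite G3y addye // addey ?leey.
  have G3f : G3 m \is a fin_num by apply/fin_numP.
  rewrite -(liminf_shift G1 m.+1).
  apply: (@le_trans _ _ (limn_einf (fun n => (G3 m + K%:E) + G2 n.+1))).
    apply: le_liminf => n; rewrite addnS -addSn addeC addeA; exact: h.
  rewrite limn_einf_shift ?fin_numD ?G3f //.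
  rewrite addeC; apply: leeD => //.
  by rewrite -(liminf_shift G2 1); apply: le_liminf => n; rewrite addn1.
rewrite -addeA addeC -leeBlDr // -leeBlDr //.
apply: le_trans (inf_le_liminf G3); apply: le_ereal_inf_tmp => _ [m _ <-].
rewrite leeBlDr // leeBlDr // -addeA addeC.
by rewrite [K%:E + _]addeC -addeA [K%:E + _]addeC; exact: hm.
Qed.

End Liminf.
Section Mono.
Variable R : realType.
Variable F : R -> \bar R.
Hypothesis Fni : forall e1 e2 : R, 0 < e1 -> e1 <= e2 -> (F e2 <= F e1)%E.

Lemma limF_sup : lim (F @ 0^'+) = ereal_sup (F @` `]0, +oo[).
Proof.
apply: cvg_lim => //.
apply: (@nonincreasing_at_right_cvge R F 0 (BInfty R false)) => //.
move=> a b; rewrite !in_itv /= !andbT => a0 b0 ab; exact: Fni.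
Qed.

Lemma F_le_lim e : 0 < e -> (F e <= lim (F @ 0^'+))%E.
Proof.
move=> e0; rewrite limF_sup; apply: ereal_sup_ubound; exists e => //.
by rewrite /= in_itv /= andbT.
Qed.

Lemma lim_le d c : 0 < d -> (forall e, 0 < e -> e < d -> (F e <= c)%E) ->
  (lim (F @ 0^'+) <= c)%E.
Proof.
move=> d0 h; rewrite limF_sup; apply: ub_ereal_sup => _ [e /= + <-].
rewrite in_itv /= andbT => e0.
have m0 : 0 < Num.min e (d / 2) by rewrite lt_min e0 divr_gt0.
have m1 : Num.min e (d / 2) <= e by rewrite ge_min lexx.
have m2 : Num.min e (d / 2) <= d / 2 by rewrite ge_min lexx orbT.
apply: le_trans (Fni m0 m1) _ ; apply: h => //.
rewrite (le_lt_trans m2) //; lra.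
Qed.

End Mono.

Section Main.
Variable R : realType.
Variable phi : X R -> R.
Variable L : R.
Hypothesis hL : forall a b : X R, `|phi a - phi b| <= L * dX a b.
Variable u : X R -> R.
Hypothesis cu : continuous_X u.
Hypothesis hsub : forall x : X R, u (Defs.shift x) + alpha phi <= u x + phi x.
Local Notation sh := (@Defs.shift R).

Definition G (a b : X R) (eps : R) (n : nat) : \bar R :=
  ereal_inf [set (cost phi n z)%:E | z in Bset a b n eps].
Definition Fn (a b : X R) (eps : R) : \bar R := limn_einf (G a b eps).

Lemma PeierlsE a b : Peierls phi a b = lim (Fn a b @ 0^'+).
Proof. by []. Qed.

Lemma Fn_ni a b : forall e1 e2 : R, 0 < e1 -> e1 <= e2 -> (Fn a b e2 <= Fn a b e1)%E.
Proof.
move=> e1 e2 e0 e12; apply: le_liminf => n; apply: ereal_inf_le_tmp.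
move=> _ [z [h1 h2] <-]; exists z => //; split; exact: lt_le_trans e12.
Qed.

Lemma concat eps n m (x z y w w' : X R) : Bset x z n.+1 eps w -> Bset z y m eps w' ->
  Bset x y (n.+1 + m) (2 * eps) (catX n.+1 w w') /\
  cost phi (n.+1 + m) (catX n.+1 w w') <= cost phi n.+1 w + cost phi m w' + 2 * `|L| * eps.
Proof.
move=> [h1 h2] [h3 h4]; set v := catX n.+1 w w'.
have e0 : 0 < eps := le_lt_trans (dX_ge0 _ _) h1.
have agr : forall i, (i < n.+1)%N -> w i = v i by move=> i ilt; rewrite catX_agree.
have D : dX (iter n.+1 sh w) (iter n.+1 sh v) < 2 * eps.
  rewrite /v catX_shift; apply: le_lt_trans (dX_tri _ z _) _; lra.
split; [split|].
- apply: le_lt_trans (dX_tri _ w _) _.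
  have := dX_agreeS agr; lra.
- by rewrite addnC iterD /v catX_shift; lra.
- rewrite cost_split /v catX_shift.
  have := cost_agree hL agr; rewrite -/v.
  have : `|L| * dX (iter n.+1 sh w) (iter n.+1 sh v) <= `|L| * (2 * eps).
    by rewrite ler_wpM2l // ltW.
  lra.
Qed.

Lemma LB a b (δ : R) : 0 < δ -> exists2 d : R, 0 < d &
  forall eps n w, eps <= d -> Bset a b n eps w -> u b - u a - 2 * δ <= cost phi n w.
Proof.
move=> d0; have [d1 d10 h1] := cu a d0; have [d2 d20 h2] := cu b d0.
exists (Num.min d1 d2); first by rewrite lt_min d10 d20.
move=> eps n w ed [b1 b2].
have e1 : eps <= d1 by apply: le_trans ed _; rewrite ge_min lexx.
have e2 : eps <= d2 by apply: le_trans ed _; rewrite ge_min lexx orbT.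
have := h1 w (lt_le_trans b1 e1).
have := h2 (iter n sh w); rewrite dX_sym => /(_ (lt_le_trans b2 e2)).
have := sub_cost hsub n w.
rewrite !ltr_norml; lra.
Qed.

Lemma P_lb a b : ((u b - u a)%:E <= Peierls phi a b)%E.
Proof.
apply/lee_subgt0Pr => e e0.
have e20 : 0 < e / 2 by rewrite divr_gt0.
have [d d0 hd] := LB a b e20.
rewrite PeierlsE; apply: le_trans (F_le_lim (Fn_ni a b) d0).
apply: ge_liminf => n; apply: le_ereal_inf_tmp => _ [w hw <-].
rewrite -EFinB lee_fin; have := hd d n w (lexx d) hw; lra.
Qed.


Lemma G_tri x z y eps n m c1 c2 :
  (forall w, Bset x z n.+1 eps w -> c1 <= cost phi n.+1 w) ->
  (forall w, Bset z y m eps w -> c2 <= cost phi m w) ->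
  (G x y (2 * eps) (n.+1 + m) <= G x z eps n.+1 + G z y eps m + (2 * `|L| * eps)%:E)%E.
Proof.
move=> h1 h2; rewrite /G.
apply: (inf_add_le h1 h2) => w w' hw hw'.
have [hv hc] := concat hw hw'.
apply: le_trans (ereal_inf_lbound _) _; first by exists (catX n.+1 w w').
by rewrite lee_fin.
Qed.

Lemma F_tri x z y eps c1 c2 :
  (forall n w, Bset x z n eps w -> c1 <= cost phi n w) ->
  (forall n w, Bset z y n eps w -> c2 <= cost phi n w) ->
  (Fn x y (2 * eps) <= Fn x z eps + Fn z y eps + (2 * `|L| * eps)%:E)%E.
Proof.
move=> h1 h2; apply: (@liminf_tri _ _ _ _ _ c1 c2).
- by move=> n; apply: le_ereal_inf_tmp => _ [w hw <-]; rewrite lee_fin; exact: h1.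
- by move=> n; apply: le_ereal_inf_tmp => _ [w hw <-]; rewrite lee_fin; exact: h2.
- move=> n m; apply: G_tri; [exact: h1|exact: h2].
Qed.

Lemma P_tri x z y : (Peierls phi x y <= Peierls phi x z + Peierls phi z y)%E.
Proof.
have [d1 d10 hd1] := LB x z ltr01.
have [d2 d20 hd2] := LB z y ltr01.
have d0 : 0 < Num.min d1 d2 by rewrite lt_min d10 d20.
rewrite PeierlsE; apply: (lim_le (Fn_ni x y) d0) => e e0 ed.
apply/lee_addgt0Pr => r r0.
set t := Num.min (e / 2) (r / (2 * `|L| + 1)).
have t0 : 0 < t by rewrite lt_min !divr_gt0 //; rewrite ltr_wpDl // mulr_ge0.
have te : t <= e / 2 by rewrite ge_min lexx.
have tr : t <= r / (2 * `|L| + 1) by rewrite ge_min lexx orbT.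
have md1 : Num.min d1 d2 <= d1 by rewrite ge_min lexx.
have md2 : Num.min d1 d2 <= d2 by rewrite ge_min lexx orbT.
have td1 : t <= d1 by apply: (le_trans te); lra.
have td2 : t <= d2 by apply: (le_trans te); lra.
have t2e : 2 * t <= e by lra.
have t20 : 0 < 2 * t by lra.
apply: le_trans (Fn_ni x y t20 t2e) _.
apply: le_trans (F_tri (c1 := u z - u x - 2 * 1) (c2 := u y - u z - 2 * 1) _ _) _.
- by move=> n w hw; exact: hd1 td1 hw.
- by move=> n w hw; exact: hd2 td2 hw.
apply: leeD; first by apply: leeD; rewrite PeierlsE; exact: (F_le_lim (Fn_ni _ _) t0).
rewrite lee_fin.
have hL0 : 0 < 2 * `|L| + 1 by rewrite ltr_wpDl // mulr_ge0.
have : t * (2 * `|L| + 1) <= r by rewrite -ler_pdivlMr.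
have := normr_ge0 L; nra.
Qed.

End Main.

Unset Implicit Arguments.

Theorem theorem2p14 (R : realType) (phi : X R -> R) (u : X R -> R)
  (x z : X R) :
  lipschitz_X phi ->
  calibrated_subaction phi u ->
  x \in Aubry phi -> z \in Aubry phi ->
  (Peierls phi x z + Peierls phi z x = 0)%E ->
  forall y : X R,
    (Peierls phi x y + (u x)%:E = Peierls phi z y + (u z)%:E)%E.
Proof.
move=> [L hL] [[cu hsub'] _] _ _ hxz y.
have hsub : forall x : X R, u (Defs.shift x) + alpha phi <= u x + phi x.
  by move=> a; have := hsub' a; lra.
have la := P_lb cu hsub x z.
have lb := P_lb cu hsub z x.
have e1 : Peierls phi x z = (u z - u x)%:E.
  move: hxz la lb; case: (Peierls phi x z) => [p| |]; case: (Peierls phi z x) => [q| |] //=.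
  move=> /eqP; rewrite -EFinD eqe => /eqP pq; rewrite !lee_fin => h1 h2.
  congr (_%:E); lra.
have e2 : Peierls phi z x = (u x - u z)%:E.
  move: hxz; rewrite e1; case: (Peierls phi z x) => [q| |] //=.
  move=> /eqP; rewrite -EFinD eqe => /eqP pq; congr (_%:E); lra.
have t1 := P_tri hL cu hsub x z y.
have t2 := P_tri hL cu hsub z x y.
rewrite e1 in t1; rewrite e2 in t2.
apply/eqP; rewrite eq_le; apply/andP; split.
- move: t1 t2; case: (Peierls phi x y) => [p| |]; case: (Peierls phi z y) => [q| |] //=;
    rewrite ?lee_fin; lra.
- move: t1 t2; case: (Peierls phi x y) => [p| |]; case: (Peierls phi z y) => [q| |] //=;
    rewrite ?lee_fin; lra.
Qed.
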